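(* Let $G$ be a locally compact topological group, let $(X,G)$ be a minimal continuous action on a compact metrizable space, and let $(Y,G)$ be a factor of $(X,G)$ through a proximal factor map $\phi\colon X\to Y$. Then $$r_c(Y,G)\leq r_c(X,G)\leq r_m(Y,G).$$
   Context: A continuous action $(X,G)$ is a continuous map $G\times X\to X$, $(g,x)\mapsto gx$, with $g(hx)=(gh)x$ and $ex=x$; here $X$ is a compact metrizable space with compatible metric $d$. $(X,G)$ is minimal if every orbit $Gx$ is dense in $X$. A factor map $\phi\colon X\to Y$ between continuous actions is a continuous surjection with $\phi(gx)=g\phi(x)$ for all $g,x$. A pair $(x_1,x_2)\in X^2$ is proximal if for every $\varepsilon>0$ there is $g\in G$ with $d(gx_1,gx_2)<\varepsilon$; $P(X,G)$ denotes the set of proximal pairs. A factor map $\phi$ is proximal if $\phi(x)=\phi(y)$ implies $(x,y)\in P(X,G)$. An action is equicontinuous if for every $\varepsilon>0$ there is $\delta>0$ such that $d(x,y)<\delta$ implies $d(gx,gy)<\varepsilon$ for all $g\in G$. The maximal equicontinuous factor $(X_{eq},G)$, with factor map $\pi_{eq}\colon X\to X_{eq}$, is the (unique up to conjugacy) equicontinuous factor of $(X,G)$ of which every equicontinuous factor of $(X,G)$ is a factor. The minimal rank is $r_m(X,G)=\inf\{|\pi_{eq}^{-1}(y)|: y\in X_{eq}\}$ (cardinalities, possibly infinite). The coincidence rank: for $y\in X_{eq}$ let $r_c(X,G;y)=\sup\{n\in\mathbb{N}:\exists x_1,\dots,x_n\in\pi_{eq}^{-1}(y)$ with $(x_i,x_j)\notin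 P(X,G)$ for all $i\neq j\}$; for minimal actions this value does not depend on $y$, and $r_c(X,G)$ denotes this common value. *)

(* Defs.v *)
From HB Require Import structures.
From mathcomp Require Import all_boot all_order all_algebra.
From mathcomp Require Import finmap.
From mathcomp Require Import all_classical all_reals all_analysis.
Set Implicit Arguments. Unset Strict Implicit. Unset Printing Implicit Defensive.
Import Order.TTheory GRing.Theory Num.Theory.
Local Open Scope classical_set_scope.
Local Open Scope ring_scope.

Definition topological_group (G : topologicalType)
  (mul : G -> G -> G) (inv : G -> G) (one : G) : Prop :=
  [/\ associative mul, left_id one mul, right_id one mul,
      (left_inverse one inv mul /\ right_inverse one inv mul) &
      (continuous (fun p : G * G => mul p.1 p.2) /\ continuous inv)].

(* compact metrizable space, the metric structure being given by the
   pseudometric structure of X (Hausdorff, hence a genuine metric). *)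
Definition compact_metric_space (R : realType) (X : pseudoMetricType R) : Prop :=
  hausdorff_space X /\ compact [set: X].

Definition continuous_action (G : topologicalType) (mul : G -> G -> G) (one : G)
  (X : topologicalType) (act : G -> X -> X) : Prop :=
  [/\ continuous (fun p : G * X => act p.1 p.2),
      (forall g h x, act g (act h x) = act (mul g h) x) &
      (forall x, act one x = x)].

Definition minimal_action (G X : topologicalType) (act : G -> X -> X) : Prop :=
  forall x, closure [set act g x | g in [set: G]] = [set: X].

Definition proximal (R : realType) (G : Type) (X : pseudoMetricType R)
  (act : G -> X -> X) (x1 x2 : X) : Prop :=
  forall e : R, 0 < e -> exists g, ball (act g x1) e (act g x2).

Definition factor_map (G X Y : topologicalType) (actX : G -> X -> X)
  (actY : G -> Y -> Y) (phi : X -> Y) : Prop :=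
  [/\ continuous phi, (forall y, exists x, phi x = y) &
      (forall g x, phi (actX g x) = actY g (phi x))].

Definition proximal_factor_map (R : realType) (G : topologicalType)
  (X Y : pseudoMetricType R) (actX : G -> X -> X) (actY : G -> Y -> Y)
  (phi : X -> Y) : Prop :=
  factor_map actX actY phi /\
  (forall x y, phi x = phi y -> proximal actX x y).

Definition equicontinuous_action (R : realType) (G : Type)
  (X : pseudoMetricType R) (act : G -> X -> X) : Prop :=
  forall e : R, 0 < e -> exists2 d : R, 0 < d &
    forall x y, ball x d y -> forall g, ball (act g x) e (act g y).

Definition max_equicontinuous_factor (R : realType) (G : topologicalType)
  (mul : G -> G -> G) (one : G) (X : pseudoMetricType R) (actX : G -> X -> X)
  (Xeq : pseudoMetricType R) (actEq : G -> Xeq -> Xeq) (pi : X -> Xeq) : Prop :=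
  [/\ compact_metric_space Xeq, continuous_action mul one actEq,
      equicontinuous_action actEq, factor_map actX actEq pi &
      forall (Z : pseudoMetricType R) (actZ : G -> Z -> Z) (psi : X -> Z),
        compact_metric_space Z -> continuous_action mul one actZ ->
        equicontinuous_action actZ -> factor_map actX actZ psi ->
        exists theta : Xeq -> Z,
          factor_map actEq actZ theta /\ forall x, theta (pi x) = psi x].

Definition card_e (R : realType) (T : choiceType) (A : set T) : \bar R :=
  if `[< finite_set A >] then ((#|` fset_set A|)%:R)%:E else +oo%E.

Definition min_rank (R : realType) (X Xeq : pseudoMetricType R)
  (pi : X -> Xeq) : \bar R :=
  ereal_inf (range (fun y : Xeq => card_e R (pi @^-1` [set y]))).

Definition coincidence_rank_at (R : realType) (G : Type)
  (X Xeq : pseudoMetricType R) (act : G -> X -> X) (pi : X -> Xeq)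
  (y : Xeq) : \bar R :=
  ereal_sup [set (n%:R)%:E | n in
    [set n : nat | exists xs : 'I_n -> X,
       (forall i, pi (xs i) = y) /\
       (forall i j, i != j -> ~ proximal act (xs i) (xs j))]].

(* Main.v *)
Require Import Defs.
From HB Require Import structures.
From mathcomp Require Import all_boot all_order all_algebra.
From mathcomp Require Import finmap.
From mathcomp Require Import all_classical all_reals all_analysis.
From mathcomp Require Import lra.
Import Order.TTheory GRing.Theory Num.Theory.
Local Open Scope classical_set_scope.
Local Open Scope ring_scope.

Lemma ultra_lim (T : Type) (U : set_system T) (X : topologicalType)
  (f : T -> X) : UltraFilter U -> compact [set: X] -> exists p : X, f @ U --> p.
Proof.
move=> UU cX.
have [p [_ cp]] := cX (f @ U) (fmap_proper_filter f _) filterT.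
exists p => V Vp.
have [//|Uc] := in_ultra_setVsetC (f @^-1` V) UU.
have [z [/= ? ?]] := cp (~` V) V Uc Vp.
by [].
Qed.

Lemma prox_equi_eq (R : realType) (G : Type) (mul : G -> G -> G) (inv : G -> G)
  (one : G) (Z : pseudoMetricType R) (act : G -> Z -> Z) :
  hausdorff_space Z -> left_inverse one inv mul ->
  (forall g h x, act g (act h x) = act (mul g h) x) -> (forall x, act one x = x) ->
  equicontinuous_action act -> forall a b, proximal act a b -> a = b.
Proof.
move=> hZ linv hm h1 he a b pab.
apply: close_eq => //; rewrite ball_close => e.
have [d d0 hd] := he _ (gt0 e).
have [g hg] := pab _ d0.
have := hd _ _ hg (inv g).
by rewrite !hm linv !h1.
Qed.

Lemma prox_map (R : realType) (G : Type) (X Y : pseudoMetricType R)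
  (actX : G -> X -> X) (actY : G -> Y -> Y) (f : X -> Y) :
  hausdorff_space X -> compact [set: X] -> continuous f ->
  (forall g x, f (actX g x) = actY g (f x)) ->
  forall x x', proximal actX x x' -> proximal actY (f x) (f x').
Proof.
move=> hX cX fc fe x x' pxx' e e0.
pose F := filter_from [set d : R | 0 < d]
  (fun d => [set g | ball (actX g x) d (actX g x')]).
have FF : ProperFilter F.
  apply: filter_from_proper; last first.
    by move=> d d0; have [g hg] := pxx' d d0; exists g.
  apply: filter_from_filter; first by exists 1; rewrite /= ltr01.
  move=> i j i0 j0; exists (Num.min i j); first by rewrite /= lt_min i0 j0.
  by move=> g hg; split; apply: le_ball hg; rewrite ge_min lexx ?orbT.
have [U [UU FU]] := @ultraFilterLemma _ _ FF.
have UP : ProperFilter U by apply: ultra_proper.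
have [p hp] := @ultra_lim _ _ _ (fun g => actX g x) UU cX.
have [p' hp'] := @ultra_lim _ _ _ (fun g => actX g x') UU cX.
have pp' : p = p'.
  apply: (close_eq hX); rewrite ball_close => eps.
  have q0 : 0 < eps%:num / 2 / 2 by rewrite !divr_gt0.
  have h1 : \forall g \near U, ball p (eps%:num/2/2) (actX g x).
    exact: (cvg_ball hp q0).
  have h2 : \forall g \near U, ball p' (eps%:num/2/2) (actX g x').
    exact: (cvg_ball hp' q0).
  have h3 : U [set g | ball (actX g x) (eps%:num/2/2) (actX g x')].
    by apply: FU; exists (eps%:num/2/2).
  have [g [[a b] c]] := filter_ex (filterI (filterI h1 h2) h3).
  apply: (@ball_split _ _ (actX g x)).
    by apply: (le_ball _ a); have := gt0 eps; lra.
  by apply: (@ball_split _ _ (actX g x')) => //; apply: ball_sym.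
subst p'.
have e2 : 0 < e / 2 by lra.
have k1 : \forall g \near U, ball (f p) (e/2) (f (actX g x)).
  exact: (cvg_ball (cvg_comp _ _ hp (fc p)) e2).
have k2 : \forall g \near U, ball (f p) (e/2) (f (actX g x')).
  exact: (cvg_ball (cvg_comp _ _ hp' (fc p)) e2).
have [g [a b]] := filter_ex (filterI k1 k2).
exists g; rewrite -!fe.
exact: ball_splitr a b.
Qed.

Lemma act_cont (G X : topologicalType) (act : G -> X -> X) :
  continuous (fun p : G * X => act p.1 p.2) -> forall h, continuous (act h).
Proof.
move=> c h x.
apply: (cvg_comp (fun y => (h, y)) (fun p : G * X => act p.1 p.2) _ (c (h, x))).
by apply: cvg_pair; [exact: cvg_cst | exact: cvg_id].
Qed.

Lemma fiber_transfer (R : realType) (G : Type) (mul : G -> G -> G)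
  (X Z : pseudoMetricType R) (actX : G -> X -> X) (actZ : G -> Z -> Z)
  (pi : X -> Z) :
  hausdorff_space Z -> compact [set: X] ->
  (forall h, continuous (actX h)) ->
  (forall g h x, actX g (actX h x) = actX (mul g h) x) ->
  (forall x, closure [set actX g x | g in [set: G]] = [set: X]) ->
  continuous pi -> (forall z, exists x, pi x = z) ->
  (forall g x, pi (actX g x) = actZ g (pi x)) ->
  forall a b n (xs : 'I_n -> X), (forall i, pi (xs i) = a) ->
  (forall i j, i != j -> ~ proximal actX (xs i) (xs j)) ->
  exists zs : 'I_n -> X, (forall i, pi (zs i) = b) /\
    (forall i j, i != j -> ~ proximal actX (zs i) (zs j)).
Proof.
move=> hZ cX hc hm hmin pic pis pie a b n xs hxs hnp.
have [x0 hx0] := pis a; have [w hw] := pis b.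
have dense : forall V, nbhs b V -> exists g, V (actZ g a).
  move=> V Vb.
  have : closure [set actX g x0 | g in [set: G]] w by rewrite hmin.
  move=> /(_ (pi @^-1` V)) [].
    by rewrite -hw in Vb; exact: pic w _ Vb.
  by move=> _ [[g _ <-] /=]; rewrite pie hx0 => hV; exists g.
pose F := filter_from (nbhs b) (fun V => [set g | V (actZ g a)]).
have FF : ProperFilter F.
  apply: filter_from_proper; last by move=> V /dense [g hg]; exists g.
  apply: filter_from_filter; first by exists setT; exact: filterT.
  by move=> V1 V2 h1 h2; exists (V1 `&` V2) => //; exact: filterI.
have [U [UU FU]] := @ultraFilterLemma _ _ FF.
have UP : ProperFilter U by apply: ultra_proper.
pose zs i := projT1 (cid (@ultra_lim _ _ _ (fun g => actX g (xs i)) UU cX)).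
have hz i : (fun g => actX g (xs i)) @ U --> zs i.
  exact: (projT2 (cid (@ultra_lim _ _ _ (fun g => actX g (xs i)) UU cX))).
exists zs; split.
  move=> i.
  have h1 := cvg_comp _ _ (hz i) (pic (zs i)).
  have h2 : (fun g => actZ g a) @ U --> b.
    by move=> V Vb; apply: FU; exists V.
  have e : pi \o (fun g => actX g (xs i)) = (fun g => actZ g a).
    by apply: funext => g /=; rewrite pie hxs.
  rewrite e in h1.
  exact: (cvg_unique hZ h1 h2).
move=> i j ij pz; apply: (hnp i j ij) => e e0.
have e4 : 0 < e / 2 / 2 by lra.
have [h hh] := pz _ e4.
have k1 : \forall g \near U, ball (actX h (zs i)) (e/2/2) (actX h (actX g (xs i))).
  exact: (cvg_ball (cvg_comp _ _ (hz i) (hc h (zs i))) e4).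
have k2 : \forall g \near U, ball (actX h (zs j)) (e/2/2) (actX h (actX g (xs j))).
  exact: (cvg_ball (cvg_comp _ _ (hz j) (hc h (zs j))) e4).
have [g [a1 a2]] := filter_ex (filterI k1 k2).
exists (mul h g); rewrite -!hm.
apply: (@ball_split _ _ (actX h (zs i))).
  by apply: ball_sym; apply: (le_ball _ a1); lra.
apply: (@ball_split _ _ (actX h (zs j))) => //.
Qed.

Lemma cr_le (R : realType) (G : Type) (X X' Z Z' : pseudoMetricType R)
  (act : G -> X -> X) (act' : G -> X' -> X') (pi : X -> Z) (pi' : X' -> Z') a b :
  (forall n (xs : 'I_n -> X), (forall i, pi (xs i) = a) ->
     (forall i j, i != j -> ~ proximal act (xs i) (xs j)) ->
     exists zs : 'I_n -> X', (forall i, pi' (zs i) = b) /\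
      (forall i j, i != j -> ~ proximal act' (zs i) (zs j))) ->
  (coincidence_rank_at act pi a <= coincidence_rank_at act' pi' b)%E.
Proof.
move=> H; apply: ereal_sup_le => _ [n [xs [h1 h2]] <-].
have [zs [k1 k2]] := H n xs h1 h2.
by exists n => //; exists zs.
Qed.

Theorem lemma3p2 (R : realType) (G : topologicalType)
  (mul : G -> G -> G) (inv : G -> G) (one : G)
  (HG : topological_group mul inv one) (HGlc : locally_compact [set: G])
  (X Y : pseudoMetricType R) (HX : compact_metric_space X)
  (HY : compact_metric_space Y)
  (actX : G -> X -> X) (actY : G -> Y -> Y)
  (HactX : continuous_action mul one actX) (HactY : continuous_action mul one actY)
  (Hmin : minimal_action actX)
  (phi : X -> Y) (Hphi : proximal_factor_map actX actY phi)
  (Xeq : pseudoMetricType R) (actXeq : G -> Xeq -> Xeq) (piX : X -> Xeq)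
  (HXeq : max_equicontinuous_factor mul one actX actXeq piX)
  (Yeq : pseudoMetricType R) (actYeq : G -> Yeq -> Yeq) (piY : Y -> Yeq)
  (HYeq : max_equicontinuous_factor mul one actY actYeq piY) :
  forall (x0 : Xeq) (y0 : Yeq),
    (coincidence_rank_at actY piY y0 <= coincidence_rank_at actX piX x0)%E /\
    (coincidence_rank_at actX piX x0 <= min_rank piY)%E.
Proof.
move=> x0 y0.
case: HG => _ _ _ [linv rinv] _.
case: (HX) => hX cX; case: (HY) => hY cY.
case: (HactX) => cjX hmX h1X.
have hcX := @act_cont _ _ actX cjX.
case: Hphi => [[phic phis phie] phiprox].
case: HXeq => [[hXe cXe] caXe eqXe [pic pis pie] univX].
case: HYeq => [[hYe cYe] caYe eqYe [piYc piYs piYe] univY].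
case: (caXe) => _ hmXe h1Xe.
have transfer := @fiber_transfer _ _ mul _ _ actX actXeq piX hXe cX hcX hmX Hmin pic pis pie.
have factA : forall x x', phi x = phi x' -> piX x = piX x'.
  move=> x x' e.
  apply: (@prox_equi_eq _ _ mul inv one _ actXeq hXe linv hmXe h1Xe eqXe).
  apply: (@prox_map _ _ _ _ actX actXeq piX hX cX pic pie).
  exact: phiprox.
pose psi y := piX (projT1 (cid (phis y))).
have psi_phi : forall x, psi (phi x) = piX x.
  by move=> x; apply: factA; exact: (projT2 (cid (phis (phi x)))).
have psic : continuous psi.
  apply/continuous_closedP => C cC.
  have -> : psi @^-1` C = phi @` (piX @^-1` C).
    apply/seteqP; split => y.
      move=> Cy; exists (projT1 (cid (phis y))) => //.
      exact: (projT2 (cid (phis y))).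
    by case=> x Cx e; rewrite -e /preimage /= psi_phi.
  apply: (compact_closed hY); apply: continuous_compact.
    exact: continuous_subspaceT.
  apply: (subclosed_compact _ cX) => //.
  by move/continuous_closedP: pic; apply.
have psif : factor_map actY actXeq psi.
  split => //.
    by move=> z; have [x hx] := pis z; exists (phi x); rewrite psi_phi.
  by move=> g y; have [x <-] := phis y; rewrite -phie !psi_phi pie.
have [alpha [_ halpha]] := univY Xeq actXeq psi (conj hXe cXe) caXe eqXe psif.
split.
  apply: cr_le => n ys hys hnys.
  pose xs i := projT1 (cid (phis (ys i))).
  have hxs i : phi (xs i) = ys i by exact: (projT2 (cid (phis (ys i)))).
  apply: (transfer (alpha y0) x0 n xs).
    by move=> i; rewrite -(psi_phi (xs i)) (hxs i) -halpha hys.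
  move=> i j ij p; apply: (hnys i j ij); rewrite -!hxs.
  exact: (@prox_map _ _ _ _ actX actY phi hX cX phic phie _ _ p).
apply: le_ereal_inf_tmp => _ [y' _ <-].
rewrite /card_e; case: asboolP => fin; last exact: leey.
have [y1 hy1] := piYs y'; have [x1 hx1] := phis y1.
have thf : factor_map actX actYeq (piY \o phi).
  split.
  - by move=> x; apply: (cvg_comp _ _ (phic x) (piYc (phi x))).
  - by move=> z; have [y hy] := piYs z; have [x hx] := phis y; exists x; rewrite /= hx hy.
  - by move=> g x /=; rewrite phie piYe.
have [theta [_ htheta]] := univX Yeq actYeq (piY \o phi) (conj hYe cYe) caYe eqYe thf.
apply: ge_ereal_sup => _ [n [xs [hxs hnp]] <-].
have [zs [hzs hnz]] := transfer x0 (piX x1) n xs hxs hnp.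
have fib : forall i, piY (phi (zs i)) = y'.
  by move=> i; have := htheta (zs i); rewrite hzs htheta /= hx1 hy1 => <-.
rewrite lee_fin ler_nat.
have inj : injective (fun i => phi (zs i)).
  move=> i j e; apply/eqP; apply/negPn/negP => ij.
  by apply: (hnz i j ij); apply: phiprox.
pose s := [seq phi (zs i) | i <- enum 'I_n].
have us : uniq s by rewrite map_inj_uniq // enum_uniq.
have -> : n = #|` [fset x in s]%fset|.
  by rewrite card_fseq undup_id // size_map size_enum_ord.
apply: fsubset_leq_card; apply/fsubsetP => y.
rewrite inE => /mapP [i _ ->].
by rewrite in_fset_set // inE /= fib.
Qed.
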